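(* Let $\alpha\in(0,1)$, $\varepsilon\in(0,1)$, a spending sequence $(\varepsilon_t)_{t\ge0}$ and the stopping boundaries $U_t,L_t$ be as in the context. If there exist constants $\lambda>0$, $q>0$ and $T\in\mathbb{N}$ such that $\varepsilon_t-\varepsilon_{t-1}\ge\lambda t^{-q}$ for all $t\ge T$, then for all $t\ge T$, $U_t\le\big\lceil t\alpha+\sqrt{t(q\log t-\log\lambda)/2}\big\rceil$ and $L_t\ge\big\lfloor t\alpha-\sqrt{t(q\log t-\log\lambda)/2}\big\rfloor$.
   Context: $\mathbb{N}=\{1,2,\dots\}$. A spending sequence is a sequence $(\varepsilon_t)_{t\ge0}$ of reals with $0\le\varepsilon_0\le\varepsilon_1\le\cdots$ and $\varepsilon_t\to\varepsilon$. For $r\in[0,1]$, $\mathbb{P}_r$ denotes a probability under which $X_1,X_2,\dots$ are i.i.d. Bernoulli$(r)$, $S_t=\sum_{j=1}^tX_j$. The stopping boundaries are defined recursively: with $\tau=\inf\{t\in\mathbb{N}:S_t\ge U_t\text{ or }S_t\le L_t\}$ ($\inf\emptyset=\infty$; the events $\{\tau\ge t\}$, $\{\tau<t,S_\tau\ge U_\tau\}$, $\{\tau<t,S_\tau\le L_\tau\}$ only involve $U_s,L_s$, $s<t$), $U_t=\min\{j\in\mathbb{N}:\mathbb{P}_\alpha(\tau\ge t,S_t\ge j)+\mathbb{P}_\alpha(\tau<t,S_\tau\ge U_\tau)\le\varepsilon_t\}$ and $L_t=\max\{j\in\mathbb{Z}:\mathbb{P}_\alpha(\tau\ge t,S_t\le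 j)+\mathbb{P}_\alpha(\tau<t,S_\tau\le L_\tau)\le\varepsilon_t\}$. *)

(* Defs.v *)
From HB Require Import structures.
From mathcomp Require Import all_boot all_order all_algebra.
From mathcomp Require Import all_classical all_reals all_analysis.
Set Implicit Arguments. Unset Strict Implicit. Unset Printing Implicit Defensive.
Import Order.TTheory GRing.Theory Num.Theory.
Import numFieldNormedType.Exports.
Local Open Scope classical_set_scope.
Local Open Scope ring_scope.

(* A sample path w : nat -> bool; X_k = w (k-1) for k >= 1.
   S w t = X_1 + ... + X_t, as an integer. *)
Definition Ssum (w : nat -> bool) (t : nat) : int := (\sum_(i < t) (w i : nat))%:Z.

(* Extension of a finite path by false (the tail is never inspected by the
   events below, which only involve X_1..X_t). *)
Definition ext (t : nat) (w : {ffun 'I_t -> bool}) : nat -> bool :=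
  fun k => match insub k with Some i => w i | None => false end.

(* P_r(E) for an event E depending only on X_1, ..., X_t, where X_j are
   i.i.d. Bernoulli(r): the finite-dimensional marginal of the product law. *)
Definition Pr {R : realType} (r : R) (t : nat) (E : (nat -> bool) -> bool) : R :=
  \sum_(w : {ffun 'I_t -> bool})
     (\prod_(i < t) (if w i then r else 1 - r)) * (E (ext w))%:R.

Section Stopping.
Variables (U L : nat -> int) (w : nat -> bool).

Definition hit (s : nat) : bool := (U s <= Ssum w s) || (Ssum w s <= L s).

(* tau = inf {s in N : hit s};  {tau >= t} = no hit at any s in {1, ..., t-1} *)
Definition tau_ge (t : nat) : bool := all (fun s => ~~ hit s) (iota 1 t.-1).

Definition tau_eq (s : nat) : bool := (0 < s)%N && tau_ge s && hit s.

Definition upper_before (t : nat) : bool :=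
  has (fun s => tau_eq s && (U s <= Ssum w s)) (iota 1 t.-1).

Definition lower_before (t : nat) : bool :=
  has (fun s => tau_eq s && (Ssum w s <= L s)) (iota 1 t.-1).
End Stopping.

Definition spending {R : realType} (eps : nat -> R) (epsilon : R) : Prop :=
  0 <= eps 0%N /\ (forall t, eps t <= eps t.+1) /\ eps @ \oo --> epsilon.

(* U and L are the stopping boundaries defined recursively from alpha and eps:
   for every t in N,
   U_t = min {j in N : P_a(tau >= t, S_t >= j) + P_a(tau < t, S_tau >= U_tau) <= eps_t}
   L_t = max {j in Z : P_a(tau >= t, S_t <= j) + P_a(tau < t, S_tau <= L_tau) <= eps_t}.
   (tau, built from U and L, only involves U_s, L_s for s < t in these events,
   so this characterization is exactly the recursion.) *)
Definition is_boundaries {R : realType} (alpha : R) (eps : nat -> R)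
    (U L : nat -> int) : Prop :=
  forall t : nat, (0 < t)%N ->
    let FU j := Pr alpha t (fun w => tau_ge U L w t && (j <= Ssum w t))
                + Pr alpha t (fun w => upper_before U L w t) in
    let FL j := Pr alpha t (fun w => tau_ge U L w t && (Ssum w t <= j))
                + Pr alpha t (fun w => lower_before U L w t) in
    [/\ 1 <= U t, FU (U t) <= eps t,
        (forall j : int, 1 <= j -> FU j <= eps t -> U t <= j),
        FL (L t) <= eps t &
        (forall j : int, FL j <= eps t -> j <= L t)].

(* Main.v *)
Require Import Defs.
From HB Require Import structures.
From mathcomp Require Import all_boot all_order all_algebra.
From mathcomp Require Import all_classical all_reals all_analysis.
From mathcomp Require Import ring lra.
Import Order.TTheory GRing.Theory Num.Theory.
Local Open Scope ring_scope.

Section S.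
Variable R : realType.
Lemma is_derive_ext {f g : R -> R} {x df dg : R} :
  (forall y, f y = g y) -> is_derive x 1 f df -> df = dg -> is_derive x 1 g dg.
Proof. by move=> /funext <- h <-. Qed.

Lemma mono0 {f df : R -> R} {s : R} :
  (forall x : R, is_derive x 1 f (df x)) -> (forall x, 0 <= x -> 0 <= df x) ->
  0 <= s -> f 0 <= f s.
Proof.
move=> Hd Hp s0.
apply: (@ger0_derive1_ndecr R f 0 s) => //.
- move=> x; rewrite in_itv /= => /andP[x0 _].
  rewrite derive1E; have [_ ->] := Hd x; apply: Hp; exact: ltW.
- by apply: derivable_within_continuous => x _; have [] := Hd x.
Qed.

Lemma scE (u v : R) : u *: v = u * v. Proof. by []. Qed.

Variable a : R.
Hypothesis a0 : 0 < a. Hypothesis a1 : a < 1.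
Let D (s : R) := 1 - a + a * expR s.
Lemma D_gt0 s : 0 < D s.
Proof. rewrite /D; apply: ltr_wpDr; first by rewrite mulr_ge0 ?expR_ge0 ?ltW.
by rewrite subr_gt0. Qed.

Lemma dD (x : R) : is_derive x 1 D (a * expR x).
Proof.
apply: (@is_derive_ext (cst (1 - a) + a \*: expR)) => //=.
by rewrite add0r.
Qed.

Let g1 (s : R) := a + s / 4 - a * expR s / D s.
Let dg1 (s : R) := 1/4 - a * (1 - a) * expR s / (D s) ^+ 2.

Lemma dg1P (x : R) : is_derive x 1 g1 (dg1 x).
Proof.
have Dx : D x != 0 by rewrite gt_eqF // D_gt0.
have H1 := @is_derive_cst R R R a x 1.
have H2 := is_deriveZ (4^-1) (@is_derive_id R R x 1).
have H3 := is_deriveZ a (is_derive_expR x).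
have H4 := is_deriveV Dx (dD x).
have H5 := is_deriveM H3 H4.
have H := is_deriveB (is_deriveD H1 H2) H5.
apply: (is_derive_ext _ H).
- move=> y; rewrite /g1.
  by transitivity (a + 4^-1 * y - a * expR y * (D y)^-1); [by []|rewrite mulrC].
- rewrite /dg1.
  transitivity (0 + 4^-1 * 1 - (a * expR x * (- (D x)^-2 * (a * expR x)) + (D x)^-1 * (a * expR x))); first by [].
  have := D_gt0 x; rewrite /D => Dp.
  field. by rewrite gt_eqF.
Qed.

Lemma dg1_ge0 x : 0 <= dg1 x.
Proof.
have Dp := D_gt0 x.
have -> : dg1 x = (1 - a - a * expR x) ^+ 2 / (4 * (D x) ^+ 2).
  rewrite /dg1 /D in Dp *. field. by rewrite gt_eqF.
by rewrite divr_ge0 ?sqr_ge0 // mulr_ge0 // sqr_ge0.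
Qed.

Lemma g1_ge0 s : 0 <= s -> 0 <= g1 s.
Proof.
move=> s0; have := mono0 dg1P (fun x _ => dg1_ge0 x) s0.
apply: le_trans; rewrite /g1 /D expR0 mulr1 subrK mul0r addr0 divr1 subrr.
by [].
Qed.

Let g (s : R) := a * s + s ^+ 2 / 8 - ln (D s).

Lemma gP (x : R) : is_derive x 1 g (g1 x).
Proof.
have Dp := D_gt0 x.
have H1 := is_deriveZ a (@is_derive_id R R x 1).
have H2 := is_deriveZ (8^-1) (is_deriveX 2 (@is_derive_id R R x 1)).
have H3 := is_derive1_comp (is_derive1_ln Dp) (dD x).
have H := is_deriveB (is_deriveD H1 H2) H3.
apply: (is_derive_ext _ H).
- move=> y; rewrite /g exprfctE.
  by transitivity (a * y + 8^-1 * (y ^+ 2) - ln (D y)); [by []|rewrite (mulrC 8^-1)].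
- rewrite /g1.
  transitivity (a * 1 + 8^-1 * ((2%:R * x ^+ 1) * 1) - (D x)^-1 * (a * expR x)); first by [].
  field. by rewrite gt_eqF.
Qed.

Lemma hoeff s : 0 <= s -> 1 - a + a * expR s <= expR (a * s + s ^+ 2 / 8).
Proof.
move=> s0; have := mono0 gP g1_ge0 s0.
rewrite /g /D expR0 mulr1 subrK ln1 mulr0 add0r expr0n /= mul0r subr0.
rewrite subr_ge0 => h.
rewrite -[X in X <= _]lnK ?posrE ?D_gt0 //.
by rewrite ler_expR.
Qed.
End S.

Section Prob.
Variable R : realType.
Variable r : R.
Hypothesis r0 : 0 <= r. Hypothesis r1 : r <= 1.

Definition pb (b : bool) : R := if b then r else 1 - r.
Lemma pb_ge0 b : 0 <= pb b.
Proof. by case: b => /=; rewrite ?subr_ge0. Qed.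

Lemma W_ge0 t (w : {ffun 'I_t -> bool}) : 0 <= \prod_(i < t) pb (w i).
Proof. by apply: prodr_ge0 => i _; exact: pb_ge0. Qed.

Lemma Pr_le t (E F : (nat -> bool) -> bool) :
  (forall w, E w -> F w) -> Pr r t E <= Pr r t F.
Proof.
move=> EF; rewrite /Pr; apply: ler_sum => w _.
apply: ler_wpM2l; first exact: W_ge0.
by case: (boolP (E _)) => [/EF -> //|_]; case: (F _).
Qed.

Lemma Pr_or t (E F : (nat -> bool) -> bool) :
  Pr r t (fun w => E w || F w) <= Pr r t E + Pr r t F.
Proof.
rewrite /Pr -big_split /=; apply: ler_sum => w _.
rewrite -mulrDr; apply: ler_wpM2l; first exact: W_ge0.
by case: (E _); case: (F _); rewrite /= ?addr0 ?add0r ?ler_addl ?ler0n // lerDl.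
Qed.

Lemma Pr_false t : Pr r t (fun _ => false) = 0.
Proof. by rewrite /Pr big1 // => w _; rewrite mulr0. Qed.

Lemma ext_lt {t} {v : {ffun 'I_t -> bool}} {k} (hk : (k < t)%N) :
  ext v k = v (Ordinal hk).
Proof. by rewrite /ext insubT. Qed.

Lemma ext_ord t (v : {ffun 'I_t -> bool}) (i : 'I_t) : ext v i = v i.
Proof. by rewrite /ext valK. Qed.

Definition dep n (E : (nat -> bool) -> bool) :=
  forall w w', (forall k, (k < n)%N -> w k = w' k) -> E w = E w'.

Lemma Pr_marg t E : dep t E -> Pr r t.+1 E = Pr r t E.
Proof.
move=> dE; rewrite /Pr.
pose h (p : {ffun 'I_t -> bool} * bool) : {ffun 'I_t.+1 -> bool} :=
  [ffun i : 'I_t.+1 => if (val i < t)%N then ext p.1 i else p.2].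
pose hi (w : {ffun 'I_t.+1 -> bool}) : {ffun 'I_t -> bool} * bool :=
  ([ffun j : 'I_t => w (widen_ord (leqnSn t) j)], w ord_max).
have hK : cancel h hi.
  case=> v b; rewrite /h /hi /=; congr pair.
    by apply/ffunP => j; rewrite !ffunE /= ltn_ord ext_ord.
  by rewrite ffunE /= ltnn.
have hiK : cancel hi h.
  move=> w; apply/ffunP => i; rewrite /h /hi /= ffunE.
  case: ltnP => hit.
    by rewrite (ext_lt hit) ffunE; apply: congr1; apply: val_inj.
  apply: congr1; apply: val_inj => /=; apply/eqP; rewrite eqn_leq hit.
  by rewrite -ltnS ltn_ord.
rewrite (reindex h); last by exists hi => x _; [exact: hK | exact: hiK].
rewrite -(pair_big xpredT xpredT (fun v b => (\prod_(i < t.+1) pb (h (v, b) i)) * (E (ext (h (v, b))))%:R)) /=.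
apply: eq_bigr => v _.
rewrite big_bool /=.
have hE b : E (ext (h (v, b))) = E (ext v).
  apply: dE => k hk.
  have hk1 : (k < t.+1)%N by apply: ltnW.
  by rewrite (ext_lt hk1) ffunE /= hk.
have hP b : \prod_(i < t.+1) pb (h (v, b) i) = (\prod_(i < t) pb (v i)) * pb b.
  rewrite big_ord_recr /= ffunE /= ltnn; congr (_ * _).
  by apply: eq_bigr => i _; rewrite ffunE /= ltn_ord ext_ord.
rewrite !hE !hP /pb; ring.
Qed.


Lemma Ssum_ext t (v : {ffun 'I_t -> bool}) :
  (Ssum (ext v) t)%:~R = \sum_(i < t) ((v i : nat)%:R : R).
Proof.
rewrite /Ssum; have -> : forall n : nat, ((n%:Z)%:~R : R) = n%:R by [].
by rewrite natr_sum; apply: eq_bigr => i _; rewrite ext_ord.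
Qed.

Lemma chernoff t (E : (nat -> bool) -> bool) (c j : R) :
  (forall w, E w -> c * j <= c * (Ssum w t)%:~R) ->
  Pr r t E <= expR (- (c * j)) * (1 - r + r * expR c) ^+ t.
Proof.
move=> HE; rewrite /Pr.
apply: (@le_trans _ _ (\sum_(w : {ffun 'I_t -> bool})
   (\prod_(i < t) pb (w i)) * (expR (- (c * j)) * expR (c * (Ssum (ext w) t)%:~R)))).
  apply: ler_sum => w _; apply: ler_wpM2l; first exact: W_ge0.
  rewrite -expRD; case: (boolP (E _)) => [/HE h|_]; last exact: expR_ge0.
  apply: le_trans (expR_ge1Dx _); rewrite lerDl addrC subr_ge0; exact: h.
under eq_bigr => w _ do rewrite mulrCA.
rewrite -mulr_sumr; apply: ler_wpM2l; first exact: expR_ge0.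
pose F (i : 'I_t) (b : bool) := pb b * expR (c * (b : nat)%:R).
have -> : \sum_(w : {ffun 'I_t -> bool}) (\prod_(i < t) pb (w i)) * expR (c * (Ssum (ext w) t)%:~R)
   = \sum_(w : {ffun 'I_t -> bool}) \prod_(i < t) F i (w i).
  apply: eq_bigr => w _; rewrite Ssum_ext mulr_sumr (big_morph expR (@expRD R) (@expR0 R)).
  by rewrite -big_split.
rewrite -bigA_distr_bigA /=.
under eq_bigr => i _ do rewrite big_bool /F /= mulr1 mulr0 expR0 mulr1 addrC.
by rewrite prodr_const card_ord.
Qed.

End Prob.

Section Tails.
Variable R : realType.
Variable a : R.
Hypothesis a0 : 0 < a. Hypothesis a1 : a < 1.

Lemma hoeffN s : 0 <= s -> 1 - a + a * expR (- s) <= expR (- (a * s) + s ^+ 2 / 8).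
Proof.
move=> s0.
have h1 : 0 < 1 - a by rewrite subr_gt0.
have h2 : 1 - a < 1 by rewrite ltrBlDr ltrDl.
have H := @hoeff R (1 - a) h1 h2 s s0.
rewrite (_ : - (a * s) + s ^+ 2 / 8 = ((1 - a) * s + s ^+ 2 / 8) + - s); last by ring.
rewrite expRD.
apply: le_trans (ler_wpM2r (expR_ge0 (- s)) H).
have E : expR s * expR (- s) = 1 by rewrite -expRD subrr expR0.
rewrite (_ : (1 - (1 - a) + (1 - a) * expR s) * expR (- s) = a * expR (- s) + (1 - a) * (expR s * expR (- s))); last by ring.
by rewrite E mulr1 addrC.
Qed.

Lemma upper_tail t (j : int) (d : R) : (0 < t)%N -> 0 <= d -> t%:R * a + d <= j%:~R ->
  Pr a t (fun w => j <= Ssum w t) <= expR (- (2 * d ^+ 2 / t%:R)).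
Proof.
move=> t0 d0 hj.
have tR : 0 < (t%:R : R) by rewrite ltr0n.
set s := 4 * d / t%:R.
have s0 : 0 <= s by rewrite /s divr_ge0 ?mulr_ge0 // ltW.
have hc : forall w, (j <= Ssum w t) -> s * j%:~R <= s * (Ssum w t)%:~R.
  by move=> w hw; apply: ler_wpM2l => //; rewrite ler_int.
apply: le_trans (@chernoff R a (ltW a0) (ltW a1) t (fun w => j <= Ssum w t) s j%:~R hc) _.
  apply: (@le_trans _ _ (expR (- (s * j%:~R)) * expR (a * s + s ^+ 2 / 8) ^+ t)).
    apply: ler_wpM2l; first exact: expR_ge0.
    apply: lerXn2r; rewrite ?nnegrE ?expR_ge0 //; last exact: hoeff.
    by apply: addr_ge0; rewrite ?subr_ge0 ?mulr_ge0 ?expR_ge0 // ltW.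
  rewrite -expRM_natl -expRD ler_expR.
  have key : - (s * (t%:R * a + d)) + t%:R * (a * s + s ^+ 2 / 8) = - (2 * d ^+ 2 / t%:R).
    rewrite /s; field; by rewrite gt_eqF.
rewrite -key lerD2r lerN2; exact: ler_wpM2l.
Qed.

Lemma lower_tail t (j : int) (d : R) : (0 < t)%N -> 0 <= d -> j%:~R <= t%:R * a - d ->
  Pr a t (fun w => Ssum w t <= j) <= expR (- (2 * d ^+ 2 / t%:R)).
Proof.
move=> t0 d0 hj.
have tR : 0 < (t%:R : R) by rewrite ltr0n.
set s := 4 * d / t%:R.
have s0 : 0 <= s by rewrite /s divr_ge0 ?mulr_ge0 // ltW.
have hc : forall w, (Ssum w t <= j) -> - s * j%:~R <= - s * (Ssum w t)%:~R.
  by move=> w hw; rewrite !mulNr lerN2; apply: ler_wpM2l => //; rewrite ler_int.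
apply: le_trans (@chernoff R a (ltW a0) (ltW a1) t (fun w => Ssum w t <= j) (- s) j%:~R hc) _.
  rewrite mulNr opprK.
  apply: (@le_trans _ _ (expR (s * j%:~R) * expR (- (a * s) + s ^+ 2 / 8) ^+ t)).
    apply: ler_wpM2l; first exact: expR_ge0.
    apply: lerXn2r; rewrite ?nnegrE ?expR_ge0 //; last exact: hoeffN.
    by apply: addr_ge0; rewrite ?subr_ge0 ?mulr_ge0 ?expR_ge0 // ltW.
  rewrite -expRM_natl -expRD ler_expR.
  have key : s * (t%:R * a - d) + t%:R * (- (a * s) + s ^+ 2 / 8) = - (2 * d ^+ 2 / t%:R).
    rewrite /s; field; by rewrite gt_eqF.
rewrite -key lerD2r; exact: ler_wpM2l.
Qed.
End Tails.

Definition agree n (w w' : nat -> bool) := forall k, (k < n)%N -> w k = w' k.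

Lemma Ssum_agree {n w w' s} : agree n w w' -> (s <= n)%N -> Ssum w s = Ssum w' s.
Proof.
move=> h sn; rewrite /Ssum; congr Posz; apply: eq_bigr => i _.
by rewrite h // (leq_trans (ltn_ord i) sn).
Qed.

Section Events.
Variables (U L : nat -> int).

Lemma hit_agree {n w w' s} : agree n w w' -> (s <= n)%N -> hit U L w s = hit U L w' s.
Proof. by move=> h sn; rewrite /hit (Ssum_agree h sn). Qed.

Lemma iota_le {s t n} : s \in iota 1 t.-1 -> (t <= n.+1)%N -> (s <= n)%N.
Proof.
case: t => [|t]; first by rewrite /= in_nil.
rewrite /= mem_iota => /andP[s1 st] tn.
by rewrite add1n in st; rewrite -ltnS (leq_trans st tn).
Qed.

Lemma tau_ge_agree {n w w' t} : agree n w w' -> (t <= n.+1)%N ->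
  tau_ge U L w t = tau_ge U L w' t.
Proof.
move=> h tn; rewrite /tau_ge; apply: eq_in_all => s hs.
by rewrite (hit_agree h (iota_le hs tn)).
Qed.

Lemma tau_eq_agree {n w w' s} : agree n w w' -> (s <= n)%N ->
  tau_eq U L w s = tau_eq U L w' s.
Proof.
move=> h sn; rewrite /tau_eq (tau_ge_agree h (leqW sn)) (hit_agree h sn) //.
Qed.

Lemma ub_agree {n w w' t} : agree n w w' -> (t <= n.+1)%N ->
  upper_before U L w t = upper_before U L w' t.
Proof.
move=> h tn; rewrite /upper_before; apply: eq_in_has => s hs.
have sn := iota_le hs tn.
by rewrite (tau_eq_agree h sn) (Ssum_agree h sn).
Qed.

Lemma lb_agree {n w w' t} : agree n w w' -> (t <= n.+1)%N ->
  lower_before U L w t = lower_before U L w' t.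
Proof.
move=> h tn; rewrite /lower_before; apply: eq_in_has => s hs.
have sn := iota_le hs tn.
by rewrite (tau_eq_agree h sn) (Ssum_agree h sn).
Qed.

Lemma ub_step m w : upper_before U L w m.+2 =
  upper_before U L w m.+1 || (tau_ge U L w m.+1 && (U m.+1 <= Ssum w m.+1)).
Proof.
rewrite /upper_before.
have -> : iota 1 (m.+2).-1 = iota 1 m ++ [:: m.+1] by change (iota 1 m.+1 = iota 1 m ++ [:: m.+1]); rewrite -{1}[m.+1]addn1 iotaD add1n.
rewrite has_cat /= orbF.
congr orb; rewrite /tau_eq /hit /=.
by case: (U _ <= Ssum _ _); rewrite /= ?andbT ?andbF.
Qed.

Lemma lb_step m w : lower_before U L w m.+2 =
  lower_before U L w m.+1 || (tau_ge U L w m.+1 && (Ssum w m.+1 <= L m.+1)).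
Proof.
rewrite /lower_before.
have -> : iota 1 (m.+2).-1 = iota 1 m ++ [:: m.+1] by change (iota 1 m.+1 = iota 1 m ++ [:: m.+1]); rewrite -{1}[m.+1]addn1 iotaD add1n.
rewrite has_cat /= orbF.
congr orb; rewrite /tau_eq /hit /=.
by case: (Ssum _ _ <= L _); rewrite /= ?orbT ?andbT ?andbF.
Qed.

Lemma ub_1 w : upper_before U L w 1 = false. Proof. by []. Qed.
Lemma lb_1 w : lower_before U L w 1 = false. Proof. by []. Qed.

Variable R : realType.
Variables (a : R) (eps : nat -> R).
Hypothesis a0 : 0 < a. Hypothesis a1 : a < 1.
Hypothesis eps0 : 0 <= eps 0%N.
Hypothesis hB : is_boundaries a eps U L.

Lemma ub_bound t : (0 < t)%N -> Pr a t (fun w => upper_before U L w t) <= eps t.-1.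
Proof.
case: t => [//|[|m]] _.
  have -> : (fun w => upper_before U L w 1) = (fun _ => false) by apply: funext.
  by rewrite Pr_false.
have -> : (fun w => upper_before U L w m.+2) = (fun w => upper_before U L w m.+1
   || (tau_ge U L w m.+1 && (U m.+1 <= Ssum w m.+1))).
  by apply: funext => w; rewrite ub_step.
apply: le_trans (@Pr_or R a (ltW a0) (ltW a1) _ _ _) _.
have -> : Pr a m.+2 (fun w => upper_before U L w m.+1) = Pr a m.+1 (fun w => upper_before U L w m.+1).
  by apply: Pr_marg => w w' h; exact: (ub_agree h).
have -> : Pr a m.+2 (fun w => tau_ge U L w m.+1 && (U m.+1 <= Ssum w m.+1)) = Pr a m.+1 (fun w => tau_ge U L w m.+1 && (U m.+1 <= Ssum w m.+1)).
  by apply: Pr_marg => w w' h; rewrite (tau_ge_agree h) ?(Ssum_agree h).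
have [_ h2 _ _ _] := hB m.+1 isT.
by rewrite addrC.
Qed.

Lemma lb_bound t : (0 < t)%N -> Pr a t (fun w => lower_before U L w t) <= eps t.-1.
Proof.
case: t => [//|[|m]] _.
  have -> : (fun w => lower_before U L w 1) = (fun _ => false) by apply: funext.
  by rewrite Pr_false.
have -> : (fun w => lower_before U L w m.+2) = (fun w => lower_before U L w m.+1
   || (tau_ge U L w m.+1 && (Ssum w m.+1 <= L m.+1))).
  by apply: funext => w; rewrite lb_step.
apply: le_trans (@Pr_or R a (ltW a0) (ltW a1) _ _ _) _.
have -> : Pr a m.+2 (fun w => lower_before U L w m.+1) = Pr a m.+1 (fun w => lower_before U L w m.+1).
  by apply: Pr_marg => w w' h; exact: (lb_agree h).
have -> : Pr a m.+2 (fun w => tau_ge U L w m.+1 && (Ssum w m.+1 <= L m.+1)) = Pr a m.+1 (fun w => tau_ge U L w m.+1 && (Ssum w m.+1 <= L m.+1)).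
  by apply: Pr_marg => w w' h; rewrite (tau_ge_agree h) ?(Ssum_agree h).
have [_ _ _ h2 _] := hB m.+1 isT.
by rewrite addrC.
Qed.
End Events.

Theorem lemma2 (R : realType) (alpha epsilon : R) (eps : nat -> R)
    (U L : nat -> int) (lam q : R) (T : nat) :
  0 < alpha < 1 -> 0 < epsilon < 1 ->
  spending eps epsilon ->
  is_boundaries alpha eps U L ->
  0 < lam -> 0 < q -> (1 <= T)%N ->
  (forall t : nat, (T <= t)%N -> lam * (t%:R `^ (- q)) <= eps t - eps t.-1) ->
  forall t : nat, (T <= t)%N ->
    U t <= Num.ceil (t%:R * alpha
                     + Num.sqrt (t%:R * (q * ln t%:R - ln lam) / 2)) /\
    Num.floor (t%:R * alpha
               - Num.sqrt (t%:R * (q * ln t%:R - ln lam) / 2)) <= L t.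
Proof.
move=> /andP[a0 a1] _ [eps0 _] hB lam0 q0 T1 hinc t tT.
have t0 : (0 < t)%N := leq_trans T1 tT.
have tR : 0 < (t%:R : R) by rewrite ltr0n.
set X := q * ln t%:R - ln lam.
set r := Num.sqrt (t%:R * X / 2).
have r0 : 0 <= r := sqrtr_ge0 _.
have hX : X <= 2 * r ^+ 2 / t%:R.
  have [h|h] := leP 0 (t%:R * X / 2).
    rewrite /r sqr_sqrtr //.
    have -> : 2 * (t%:R * X / 2) / t%:R = X by field; rewrite gt_eqF.
    exact: lexx.
  have Xn : X < 0.
    by move: h; rewrite mulrAC pmulr_rlt0 // divr_gt0.
  apply: le_trans (ltW Xn) _.
  by rewrite divr_ge0 ?mulr_ge0 ?sqr_ge0 // ltW.
have key : lam * t%:R `^ (- q) = expR (- X).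
  rewrite /powR gt_eqF // -[lam in lam * _]lnK ?posrE // -expRD /X.
  by congr expR; ring.
have hinc' := hinc t tT; rewrite key in hinc'.
have hE : expR (- (2 * r ^+ 2 / t%:R)) <= expR (- X) by rewrite ler_expR lerN2.
have htA : 0 < t%:R * alpha by rewrite mulr_gt0.
have [U1 FU FUmin FL FLmax] := hB t t0.
split.
- apply: FUmin.
    rewrite -gtz0_ge1 ceil_gt0; apply: (lt_le_trans htA); by rewrite lerDl.
  apply: le_trans (lerD (@Pr_le R alpha (ltW a0) (ltW a1) t _ (fun w => Num.ceil (t%:R * alpha + r) <= Ssum w t) _)
      (@ub_bound U L R alpha eps a0 a1 eps0 hB t t0)) _.
    by move=> w /andP[].
  rewrite -lerBrDr.
  apply: le_trans (@upper_tail R alpha a0 a1 t _ r t0 r0 (ceil_ge _)) _.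
  exact: le_trans hE hinc'.
- apply: FLmax.
  apply: le_trans (lerD (@Pr_le R alpha (ltW a0) (ltW a1) t _ (fun w => Ssum w t <= Num.floor (t%:R * alpha - r)) _)
      (@lb_bound U L R alpha eps a0 a1 eps0 hB t t0)) _.
    by move=> w /andP[].
  rewrite -lerBrDr.
  apply: le_trans (@lower_tail R alpha a0 a1 t _ r t0 r0 (floor_le _)) _.
  exact: le_trans hE hinc'.
Qed.
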